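(* Let $n,p\ge 1$, let $\tau\in[0,1]$, let $\eta\ge\varepsilon>0$, and let $(Q^\ast,Y^\ast,Z^\ast)$ be an optimal solution of the learner semidefinite program described in the context (for this $\eta$, $\varepsilon$, $\tau$). Fix an index $j\in\{1,\dots,2^p\}$ and, for $(A,B)\in\mathbb{R}^{n\times n}\times\mathbb{R}^{n\times p}$, let $$\Xi(A,B)=\begin{bmatrix}\tau Q^\ast & 0 & M(A,B)^\top\\ 0 & (1-\tau)I & 0\\ M(A,B) & 0 & Q^\ast\end{bmatrix},\qquad M(A,B)=AQ^\ast+BE_jY^\ast+BE_j^-Z^\ast .$$ Then there exists a constant $\ell=\ell(\varepsilon)\ge 0$ such that $$\bigl|\lambda_{\min}(\Xi(A,B))-\lambda_{\min}(\Xi(A+\Delta A,B+\Delta B))\bigr|\le \ell\bigl(\|\Delta A\|_{\mathrm{op}}+\|\Delta B\|_{\mathrm{op}}\bigr)$$ for every $(A,B)\in\Omega$ and every perturbation $(\Delta A,\Delta B)\in\mathbb{R}^{n\times n}\times\mathbb{R}^{n\times p}$.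
   Context: Consider the discrete-time control-affine system $x(t+1)=f(x(t))+g(x(t),\phi(t))u(t)$ with $x\in\mathscr D=\{x\in\mathbb{R}^n: Lx\le \mathbf 1_\ell\}$ ($L\in\mathbb{R}^{\ell\times n}$, $\mathrm{rank}(L)=\ell$, rows $l_i$), $u\in\mathscr U=\{u\in\mathbb{R}^p:|u|\le\bar u\}$ componentwise ($\bar u\in\mathbb{R}^p_+$), $f:\mathbb{R}^n\to\mathbb{R}^n$ and $g:\mathbb{R}^n\times[0,1]^p\to\mathbb{R}^{n\times p}$ of class $C^2$, and fault parameter $\phi\in\Phi=\{\phi\in[0,1]^p:\sum_{i=1}^p\mathds 1(\phi_i=1)\ge p-1\}$. $\Omega$ is the set of pairs $(A,B)$ with $A=\frac{df}{dx}(\bar x)$ and $B=g(\bar x,\bar\phi)$ for some $\bar x\in\mathscr D$, $\bar\phi\in\Phi$; $\Omega$ is assumed bounded (it is compact and connected). $\{E_j\}_{j=1}^{2^p}$ are all $p\times p$ diagonal matrices with entries in $\{0,1\}$, and $E_j^-=I-E_j$. $\|\cdot\|_{\mathrm{op}}$ is the operator norm induced by the Euclidean norm and $\lambda_{\min}$ the smallest eigenvalue of a symmetric matrix. The identity block $(1-\tau)I$ has a fixed dimension. Learner program: given finitely many pairs $(A_i,B_i)\in\Omega$, $i=1,\dots,V$ (the vertices of the convex hull of a finite sample set in $\Omega$), maximize $\mathrm{trace}(Q)$ over symmetric $Q\in\mathbb{R}^{n\times n}$, $Y,Z\in\mathbb{R}^{p\times n}$ subject to: $\begin{bmatrix}\tau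 Q & 0 & (A_iQ+B_iE_jY+B_iE_j^-Z)^\top\\ 0&(1-\tau)I&0\\ A_iQ+B_iE_jY+B_iE_j^-Z&0&Q\end{bmatrix}\succeq\varepsilon I$ for all $i=1,\dots,V$, $j=1,\dots,2^p$; $\begin{bmatrix}1& l_iQ\\ Ql_i^\top & Q\end{bmatrix}\succeq0$ for $i=1,\dots,\ell$; $\begin{bmatrix}\bar u_i^2 & z_i\\ z_i^\top & Q\end{bmatrix}\succeq 0$ for $i=1,\dots,p$, where $z_i$ is the $i$-th row of $Z$; $Q\preceq\eta I$; $Y\in\mathcal Y$, $Z\in\mathcal Z$, where $\mathcal Y,\mathcal Z\subset\mathbb{R}^{p\times n}$ are given nonempty, convex, compact sets. *)

(* Defs.v *)
From HB Require Import structures.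
From mathcomp Require Import all_boot all_order all_algebra.
From mathcomp Require Import all_classical all_reals all_analysis.
Set Implicit Arguments. Unset Strict Implicit. Unset Printing Implicit Defensive.
Import Order.TTheory GRing.Theory Num.Theory.
Import numFieldNormedType.Exports.
Local Open Scope classical_set_scope.
Local Open Scope ring_scope.

Section Defs.
Variable R : realType.

Definition enorm k (x : 'cV[R]_k) : R := Num.sqrt (\sum_(i < k) x i 0 ^+ 2).

Definition opnorm a b (M : 'M[R]_(a, b)) : R :=
  sup [set enorm (M *m x) | x in [set x : 'cV[R]_b | enorm x <= 1]].

Definition lambda_min k (M : 'M[R]_k) : R := inf [set a : R | eigenvalue M a].

Definition psd k (M : 'M[R]_k) : Prop :=
  M^T = M /\ forall x : 'cV[R]_k, 0 <= (x^T *m M *m x) 0 0.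
Definition loewner_ge k (A B : 'M[R]_k) : Prop := psd (A - B).

Definition ebasis k (i : 'I_k) : 'cV[R]_k := delta_mx i 0.

Definition C2 k (W : normedModType R) (F : 'cV[R]_k -> W) : Prop :=
  continuous F /\
  (forall i x, derivable F x (ebasis i)) /\
  (forall i, continuous ('D_(ebasis i) F)) /\
  (forall i j x, derivable ('D_(ebasis i) F) x (ebasis j)) /\
  (forall i j, continuous ('D_(ebasis j) ('D_(ebasis i) F))).

Definition jac k (f : 'cV[R]_k -> 'cV[R]_k) (x : 'cV[R]_k) : 'M[R]_k :=
  \matrix_(i, j) ('D_(ebasis j) f x) i 0.

Definition joint n p (g : 'cV[R]_n -> 'cV[R]_p -> 'M[R]_(n, p))
  (z : 'cV[R]_(n + p)) : 'M[R]_(n, p) := g (usubmx z) (dsubmx z).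

Definition Dset l n (L : 'M[R]_(l, n)) : set 'cV[R]_n :=
  [set x | forall i, (L *m x) i 0 <= 1].

Definition Phiset p : set 'cV[R]_p :=
  [set phi : 'cV[R]_p | (forall i, 0 <= phi i 0 <= 1) /\
             (p - 1 <= #|[pred i : 'I_p | phi i ord0 == (1%R : R)]|)%N].

Definition Omega l n p (L : 'M[R]_(l, n)) (f : 'cV[R]_n -> 'cV[R]_n)
  (g : 'cV[R]_n -> 'cV[R]_p -> 'M[R]_(n, p)) : set ('M[R]_n * 'M[R]_(n, p)) :=
  [set AB | exists xb phib, Dset L xb /\ Phiset phib /\
            AB = (jac f xb, g xb phib)].

(* E_j: diagonal 0/1 matrices, indexed by the 0/1 pattern of the diagonal. *)
Definition Emat p (s : {ffun 'I_p -> bool}) : 'M[R]_p :=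
  diag_mx (\row_i (s i)%:R).
Definition Emat_c p (s : {ffun 'I_p -> bool}) : 'M[R]_p := 1%:M - Emat s.

Definition convhull N n p (S : 'I_N -> 'M[R]_n * 'M[R]_(n, p))
  : set ('M[R]_n * 'M[R]_(n, p)) :=
  [set AB | exists w : 'I_N -> R, (forall k, 0 <= w k) /\ \sum_k w k = 1 /\
      AB = (\sum_k w k *: (S k).1, \sum_k w k *: (S k).2)].
Definition is_vertex N n p (S : 'I_N -> 'M[R]_n * 'M[R]_(n, p))
  (AB : 'M[R]_n * 'M[R]_(n, p)) : Prop :=
  convhull S AB /\
  forall (a b : 'M[R]_n * 'M[R]_(n, p)) (t : R), convhull S a -> convhull S b ->
    0 < t < 1 -> AB = (t *: a.1 + (1 - t) *: b.1, t *: a.2 + (1 - t) *: b.2) ->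
    a = AB /\ b = AB.

Definition convex_mxset a b (S : set 'M[R]_(a, b)) : Prop :=
  forall x y (t : R), S x -> S y -> 0 <= t <= 1 -> S (t *: x + (1 - t) *: y).

Definition Xi n m (tau : R) (Q M : 'M[R]_n) : 'M[R]_(n + m + n) :=
  block_mx (block_mx (tau *: Q) 0 0 ((1 - tau)%:M)) (col_mx M^T 0)
           (row_mx M 0) Q.

Definition Mcl n p (A : 'M[R]_n) (B : 'M[R]_(n, p)) (s : {ffun 'I_p -> bool})
  (Q : 'M[R]_n) (Y Z : 'M[R]_(p, n)) : 'M[R]_n :=
  A *m Q + B *m Emat s *m Y + B *m Emat_c s *m Z.

Definition learner_feasible l n p m V (L : 'M[R]_(l, n)) (ubar : 'cV[R]_p)
  (tau eps eta : R) (AB : 'I_V -> 'M[R]_n * 'M[R]_(n, p))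
  (Yset Zset : set 'M[R]_(p, n)) (Q : 'M[R]_n) (Y Z : 'M[R]_(p, n)) : Prop :=
  Q^T = Q /\
  (forall (i : 'I_V) (s : {ffun 'I_p -> bool}),
     loewner_ge (Xi m tau Q (Mcl (AB i).1 (AB i).2 s Q Y Z)) (eps%:M)) /\
  (forall i : 'I_l,
     loewner_ge (block_mx (1%:M : 'M[R]_1) (row i L *m Q)
                          (Q *m (row i L)^T) Q) 0) /\
  (forall i : 'I_p,
     loewner_ge (block_mx ((ubar i 0 ^+ 2)%:M : 'M[R]_1) (row i Z)
                          ((row i Z)^T) Q) 0) /\
  loewner_ge (eta%:M) Q /\
  Yset Y /\ Zset Z.

Definition learner_optimal l n p m V (L : 'M[R]_(l, n)) (ubar : 'cV[R]_p)
  (tau eps eta : R) (AB : 'I_V -> 'M[R]_n * 'M[R]_(n, p))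
  (Yset Zset : set 'M[R]_(p, n)) (Q : 'M[R]_n) (Y Z : 'M[R]_(p, n)) : Prop :=
  learner_feasible m L ubar tau eps eta AB Yset Zset Q Y Z /\
  forall Q' Y' Z', learner_feasible m L ubar tau eps eta AB Yset Zset Q' Y' Z' ->
    \tr Q' <= \tr Q.

End Defs.

(* Main.v *)
Require Import Defs.
From HB Require Import structures.
From mathcomp Require Import all_boot all_order all_algebra.
From mathcomp Require Import all_classical all_reals all_analysis.
From mathcomp Require Import ring lra.
Import Order.TTheory GRing.Theory Num.Theory.
Import numFieldNormedType.Exports.
Local Open Scope classical_set_scope.
Local Open Scope ring_scope.

Set Implicit Arguments. Unset Strict Implicit. Unset Printing Implicit Defensive.
Section Aux.
Variable R : realType.

Definition nsq k (x : 'cV[R]_k) : R := \sum_(i < k) x i 0 ^+ 2.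
Definition dot k (x y : 'cV[R]_k) : R := (x^T *m y) 0 0.
Definition frob2 a b (M : 'M[R]_(a, b)) : R := \sum_(i < a) \sum_(j < b) M i j ^+ 2.

Lemma dotE k (x y : 'cV[R]_k) : dot x y = \sum_i x i 0 * y i 0.
Proof. by rewrite /dot mxE; apply: eq_bigr => i _; rewrite mxE. Qed.

Lemma dotxx k (x : 'cV[R]_k) : dot x x = nsq x.
Proof. by rewrite dotE; apply: eq_bigr => i _; rewrite expr2. Qed.

Lemma nsq_ge0 k (x : 'cV[R]_k) : 0 <= nsq x.
Proof. by apply: sumr_ge0 => i _; rewrite sqr_ge0. Qed.

Lemma frob2_ge0 a b (M : 'M[R]_(a, b)) : 0 <= frob2 M.
Proof. by apply: sumr_ge0 => i _; apply: sumr_ge0 => j _; rewrite sqr_ge0. Qed.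

Lemma nsq_gt0 k (x : 'cV[R]_k) : x != 0 -> 0 < nsq x.
Proof.
move=> xn0; rewrite lt_def nsq_ge0 andbT; apply/negP => /eqP H.
move/eqP: xn0; apply; apply/matrixP => i j; rewrite ord1 mxE.
have := psumr_eq0P (fun i _ => sqr_ge0 (x i 0)) H (i := i) isT.
by move/eqP; rewrite sqrf_eq0 => /eqP.
Qed.

Lemma enormE k (x : 'cV[R]_k) : enorm x = Num.sqrt (nsq x).
Proof. by []. Qed.

Lemma CS k (a x : 'I_k -> R) :
  (\sum_i a i * x i) ^+ 2 <= (\sum_i a i ^+ 2) * (\sum_i x i ^+ 2).
Proof.
have E1 : (\sum_i a i * x i) ^+ 2 = \sum_i \sum_j (a i * x i) * (a j * x j).
  by rewrite expr2 mulr_suml; apply: eq_bigr => i _; rewrite mulr_sumr.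
have E2 : (\sum_i a i ^+ 2) * (\sum_i x i ^+ 2) = \sum_i \sum_j (a i ^+ 2 * x j ^+ 2).
  by rewrite mulr_suml; apply: eq_bigr => i _; rewrite mulr_sumr.
have E3 : \sum_i \sum_j (a i * x j - a j * x i) ^+ 2 =
   \sum_i \sum_j (a i ^+ 2 * x j ^+ 2) + \sum_i \sum_j (a j ^+ 2 * x i ^+ 2)
   - 2 * \sum_i \sum_j (a i * x i) * (a j * x j).
  rewrite mulr_sumr -big_split -sumrB; apply: eq_bigr => i _.
  rewrite mulr_sumr -big_split -sumrB; apply: eq_bigr => j _ /=; ring.
have E4 : \sum_i \sum_j (a j ^+ 2 * x i ^+ 2) = \sum_i \sum_j (a i ^+ 2 * x j ^+ 2).
  by rewrite exchange_big.
have H0 : 0 <= \sum_i \sum_j (a i * x j - a j * x i) ^+ 2.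
  by apply: sumr_ge0 => i _; apply: sumr_ge0 => j _; rewrite sqr_ge0.
rewrite E3 E4 in H0; rewrite E1 E2; lra.
Qed.

Lemma dot_sq k (x y : 'cV[R]_k) : dot x y ^+ 2 <= nsq x * nsq y.
Proof. by rewrite dotE; apply: CS. Qed.

Lemma nsq_mul a b (M : 'M[R]_(a, b)) (x : 'cV[R]_b) : nsq (M *m x) <= frob2 M * nsq x.
Proof.
rewrite /nsq /frob2 mulr_suml; apply: ler_sum => i _.
rewrite mxE; exact: CS.
Qed.

Lemma sq_to_abs (q c s : R) : 0 <= s -> 0 <= c -> q ^+ 2 <= c * s ^+ 2 -> `|q| <= Num.sqrt c * s.
Proof.
move=> s0 c0 H; rewrite -sqrtr_sqr -(ger0_norm s0) -sqrtr_sqr -sqrtrM //.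
by rewrite ler_sqrt // mulr_ge0 // sqr_ge0.
Qed.

Lemma dot_abs k (x y : 'cV[R]_k) : `|dot x y| <= enorm x * enorm y.
Proof.
rewrite !enormE -sqrtrM ?nsq_ge0 // -sqrtr_sqr ler_sqrt; last by rewrite mulr_ge0 ?nsq_ge0.
exact: dot_sq.
Qed.

Lemma enorm_mul a b (M : 'M[R]_(a, b)) (x : 'cV[R]_b) :
  enorm (M *m x) <= Num.sqrt (frob2 M) * enorm x.
Proof.
rewrite !enormE -sqrtrM ?frob2_ge0 // ler_sqrt; last by rewrite mulr_ge0 ?nsq_ge0 ?frob2_ge0.
exact: nsq_mul.
Qed.

Lemma enorm_ge0 k (x : 'cV[R]_k) : 0 <= enorm x.
Proof. exact: sqrtr_ge0. Qed.

Lemma nsq_scale k c (x : 'cV[R]_k) : nsq (c *: x) = c ^+ 2 * nsq x.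
Proof. by rewrite /nsq mulr_sumr; apply: eq_bigr => i _; rewrite mxE exprMn. Qed.

Lemma enorm_scale k c (x : 'cV[R]_k) : enorm (c *: x) = `|c| * enorm x.
Proof. by rewrite !enormE nsq_scale sqrtrM ?sqr_ge0 // sqrtr_sqr. Qed.

Lemma nsq0 k : nsq (0 : 'cV[R]_k) = 0.
Proof. by rewrite /nsq big1 // => i _; rewrite mxE expr0n. Qed.

Lemma enorm0 k : enorm (0 : 'cV[R]_k) = 0.
Proof. by rewrite enormE nsq0 sqrtr0. Qed.

Lemma nsq_col k1 k2 (u : 'cV[R]_k1) (v : 'cV[R]_k2) : nsq (col_mx u v) = nsq u + nsq v.
Proof.
rewrite /nsq big_split_ord /=; congr (_ + _); apply: eq_bigr => i _.
  by rewrite col_mxEu. by rewrite col_mxEd.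
Qed.


Definition qf k (X : 'M[R]_k) (x : 'cV[R]_k) : R := dot x (X *m x).
Definition RS k (X : 'M[R]_k) : set R :=
  [set qf X x / nsq x | x in [set x : 'cV[R]_k | x != 0]].
Definition mu k (X : 'M[R]_k) : R := inf (RS X).

Lemma sqr_enorm k (x : 'cV[R]_k) : enorm x ^+ 2 = nsq x.
Proof. by rewrite enormE sqr_sqrtr // nsq_ge0. Qed.

Lemma qf_bound k (X : 'M[R]_k) x : `|qf X x| <= Num.sqrt (frob2 X) * nsq x.
Proof.
apply: (le_trans (dot_abs _ _)).
apply: (le_trans (ler_wpM2l (enorm_ge0 x) (enorm_mul X x))).
by rewrite mulrCA -expr2 sqr_enorm.
Qed.

Lemma RS_lb k (X : 'M[R]_k) : has_lbound (RS X).
Proof.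
exists (- Num.sqrt (frob2 X)) => _ [x /= xn0 <-].
have s0 := nsq_gt0 xn0.
rewrite ler_pdivlMr // mulNr; move: (qf_bound X x); rewrite ler_norml.
by case/andP.
Qed.

Lemma RS_n0 k (X : 'M[R]_k) : (0 < k)%N -> RS X !=set0.
Proof.
move=> k0; pose e : 'cV[R]_k := const_mx 1; exists (qf X e / nsq e); exists e => //=.
apply/eqP => /matrixP /(_ (Ordinal k0) 0); rewrite !mxE => /eqP; rewrite oner_eq0.
by [].
Qed.

Lemma mu_le k (X : 'M[R]_k) x : x != 0 -> mu X <= qf X x / nsq x.
Proof. by move=> xn0; apply: (ge_inf (RS_lb X)); exists x. Qed.

Lemma mu_ge k (X : 'M[R]_k) c : (0 < k)%N ->
  (forall x, x != 0 -> c <= qf X x / nsq x) -> c <= mu X.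
Proof.
move=> k0 H; apply: lb_le_inf; first exact: RS_n0.
by move=> _ [x /= xn0 <-]; apply: H.
Qed.

Lemma dot_mul k (x z : 'cV[R]_k) (M : 'M[R]_k) : dot x (M *m z) = dot (M^T *m x) z.
Proof. by rewrite /dot trmx_mul trmxK mulmxA. Qed.

Lemma dotDr k (x y z : 'cV[R]_k) : dot x (y + z) = dot x y + dot x z.
Proof. by rewrite /dot mulmxDr mxE. Qed.
Lemma dotNr k (x y : 'cV[R]_k) : dot x (- y) = - dot x y.
Proof. by rewrite /dot mulmxN mxE. Qed.
Lemma dotZr k c (x y : 'cV[R]_k) : dot x (c *: y) = c * dot x y.
Proof. by rewrite /dot -scalemxAr mxE. Qed.
Lemma dotC k (x y : 'cV[R]_k) : dot x y = dot y x.
Proof. by rewrite !dotE; apply: eq_bigr => i _; rewrite mulrC. Qed.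
Lemma dotDl k (x y z : 'cV[R]_k) : dot (y + z) x = dot y x + dot z x.
Proof. by rewrite dotC dotDr !(dotC x). Qed.
Lemma dotNl k (x y : 'cV[R]_k) : dot (- y) x = - dot y x.
Proof. by rewrite dotC dotNr dotC. Qed.
Lemma dotZl k c (x y : 'cV[R]_k) : dot (c *: y) x = c * dot y x.
Proof. by rewrite dotC dotZr dotC. Qed.

Lemma eig_ge_mu k (X : 'M[R]_k) a : eigenvalue X a -> mu X <= a.
Proof.
case/eigenvalueP => v vX vn0.
have xn0 : v^T != 0 by apply/eqP => H; move/eqP: vn0; apply; rewrite -[v]trmxK H trmx0.
have := mu_le X xn0.
have -> : qf X v^T = a * nsq v^T.
  by rewrite /qf /dot trmxK mulmxA vX -scalemxAl mxE -dotxx /dot trmxK.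
by rewrite -mulrA divff ?mulr1 // gt_eqF // nsq_gt0.
Qed.


Lemma qf_sub k (X : 'M[R]_k) c x : qf (X - c%:M) x = qf X x - c * nsq x.
Proof. by rewrite /qf mulmxBl mul_scalar_mx dotDr dotNr dotZr dotxx. Qed.

Lemma qf_ge_mu k (X : 'M[R]_k) x : mu X * nsq x <= qf X x.
Proof.
have [->|xn0] := eqVneq x 0; first by rewrite nsq0 mulr0 /qf /dot mulmx0 mulmx0 mxE.
have s0 := nsq_gt0 xn0.
by have := mu_le X xn0; rewrite ler_pdivlMr.
Qed.

Lemma mu_eig k (X : 'M[R]_k) : X^T = X -> (0 < k)%N -> eigenvalue X (mu X).
Proof.
move=> Xs k0; rewrite /eigenvalue /eigenspace kermx_eq0 row_free_unit.
apply/negP => Yu.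
set Y := X - (mu X)%:M in Yu.
have Ys : Y^T = Y by rewrite /Y linearB /= Xs tr_scalar_mx.
have q0 : forall x, 0 <= qf Y x by move=> x; rewrite qf_sub subr_ge0 qf_ge_mu.
pose c := Num.sqrt (frob2 Y) + 1.
have c0 : 0 < c by rewrite /c ltr_wpDl // sqrtr_ge0.
have key : forall x, nsq (Y *m x) <= c * qf Y x.
  move=> x; set y := Y *m x; pose t := c^-1.
  have t0 : 0 < t by rewrite invr_gt0.
  have tc : t * c = 1 by rewrite mulVf // gt_eqF.
  have := q0 (x - t *: y).
  have -> : qf Y (x - t *: y) = qf Y x - t * nsq y - t * nsq y + t ^+ 2 * qf Y y.
    rewrite /qf mulmxBr -scalemxAr dotDr dotNr dotZr !dotDl !dotNl !dotZl.
    have -> : dot y (Y *m x) = nsq y by rewrite dotxx.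
    have -> : dot x (Y *m y) = nsq y by rewrite dot_mul Ys dotxx.
    rewrite /= expr2; lra.
  have hb : qf Y y <= c * nsq y.
    apply: (le_trans (real_ler_norm _ )); first exact: num_real.
    apply: (le_trans (qf_bound _ _)); rewrite ler_wpM2r ?nsq_ge0 //.
    by rewrite /c lerDl.
  have hs := nsq_ge0 y.
  have h1 : t ^+ 2 * qf Y y <= t * nsq y.
    apply: (le_trans (ler_wpM2l _ hb)); first by rewrite sqr_ge0.
    by rewrite expr2 -mulrA (mulrA t c) tc mul1r.
  move=> H.
  have h2 : t * nsq y <= qf Y x by lra.
  have := ler_wpM2l (ltW c0) h2.
  by rewrite mulrA (mulrC c t) tc mul1r.
pose Yi := invmx Y.
pose d := frob2 Yi * c + 1.
have d0 : 0 < d by rewrite /d ltr_wpDl // mulr_ge0 ?frob2_ge0 // ltW.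
have : mu X + d^-1 <= mu X.
  apply: mu_ge => // x xn0.
  have s0 := nsq_gt0 xn0.
  have hx : nsq x <= d * qf Y x.
    have e : Yi *m (Y *m x) = x by rewrite /Yi mulKmx.
    apply: (le_trans (y := frob2 Yi * nsq (Y *m x))); first by rewrite -{1}e; apply: nsq_mul.
    apply: (le_trans (ler_wpM2l (frob2_ge0 _) (key x))).
    by rewrite mulrA ler_wpM2r // /d lerDl.
  rewrite ler_pdivlMr // mulrDl.
  have h3 : nsq x * d^-1 <= qf Y x.
    by rewrite -(ler_pM2r d0) -mulrA mulVf ?gt_eqF // mulr1 mulrC.
  move: h3; rewrite qf_sub (mulrC (d^-1)).
  set q := qf X x; set s := nsq x; set z := s * d^-1; lra.
rewrite gerDl leNgt invr_gt0 d0 //.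
Qed.

Lemma lambda_min_mu k (X : 'M[R]_k) : X^T = X -> (0 < k)%N -> lambda_min X = mu X.
Proof.
move=> Xs k0; rewrite /lambda_min.
have lb : lbound [set a : R | eigenvalue X a] (mu X) by move=> a /= /eig_ge_mu.
apply/le_anti/andP; split.
  by apply: (ge_inf (ex_intro _ (mu X) lb)); apply: mu_eig.
by apply: lb_le_inf => //; exists (mu X); apply: mu_eig.
Qed.

Lemma mu_lip k (X X' : 'M[R]_k) kap : (0 < k)%N ->
  (forall x, `|qf X' x - qf X x| <= kap * nsq x) -> `|mu X - mu X'| <= kap.
Proof.
move=> k0 H.
have one : forall (A B : 'M[R]_k), (forall x, `|qf B x - qf A x| <= kap * nsq x) ->
    mu A - kap <= mu B.
  move=> A B HB; apply: mu_ge => // x xn0.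
  have s0 := nsq_gt0 xn0.
  have := mu_le A xn0.
  have := HB x; rewrite ler_norml => /andP[h _].
  rewrite !ler_pdivlMr // mulrBl; lra.
have h1 := one _ _ H.
have h2 : mu X' - kap <= mu X.
  by apply: one => x; rewrite distrC.
rewrite ler_norml; apply/andP; split; lra.
Qed.


Definition opS a b (N : 'M[R]_(a, b)) :=
  [set enorm (N *m x) | x in [set x : 'cV[R]_b | enorm x <= 1]].

Lemma opnorm_ub a b (N : 'M[R]_(a, b)) : has_ubound (opS N).
Proof.
exists (Num.sqrt (frob2 N)) => _ [x /= hx <-].
apply: (le_trans (enorm_mul N x)).
by rewrite -{2}(mulr1 (Num.sqrt _)) ler_wpM2l // sqrtr_ge0.
Qed.

Lemma opnorm_ge0 a b (N : 'M[R]_(a, b)) : 0 <= opnorm N.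
Proof.
have h : opS N 0 by exists 0 => /=; [rewrite enorm0 ler01 | rewrite mulmx0 enorm0].
exact: (ub_le_sup (opnorm_ub N) h).
Qed.

Lemma opnorm_bound a b (N : 'M[R]_(a, b)) v : enorm (N *m v) <= opnorm N * enorm v.
Proof.
have [->|vn0] := eqVneq v 0; first by rewrite mulmx0 !enorm0 mulr0.
have e0 : 0 < enorm v by rewrite enormE sqrtr_gt0 nsq_gt0.
pose w := (enorm v)^-1 *: v.
have hw : enorm w = 1 by rewrite enorm_scale ger0_norm ?invr_ge0 ?(ltW e0) // mulVf // gt_eqF.
have h : opS N (enorm (N *m w)) by exists w => //=; rewrite hw.
have h2 : enorm (N *m w) <= opnorm N by exact: (ub_le_sup (opnorm_ub N) h).
move: h2; rewrite /w -scalemxAr enorm_scale ger0_norm ?invr_ge0 ?(ltW e0) //.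
move=> h2; have := ler_wpM2r (ltW e0) h2.
by rewrite mulrAC mulVf ?gt_eqF // mul1r.
Qed.

Lemma dot_col k1 k2 (a c : 'cV[R]_k1) (b d : 'cV[R]_k2) :
  dot (col_mx a b) (col_mx c d) = dot a c + dot b d.
Proof. by rewrite /dot tr_col_mx mul_row_col mxE. Qed.

Lemma qf_Xi n m tau (Q M : 'M[R]_n) x1 (x2 : 'cV[R]_m) x3 :
  qf (Xi m tau Q M) (col_mx (col_mx x1 x2) x3) =
  tau * dot x1 (Q *m x1) + (1 - tau) * nsq x2 + 2 * dot x3 (M *m x1) + dot x3 (Q *m x3).
Proof.
rewrite /qf /Xi mul_block_col !mul_block_col !mul_col_mx !mul_row_col.
rewrite !mul0mx !addr0 !add0r add_col_mx addr0 !dot_col !dotDr mul_scalar_mx -scalemxAl.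
rewrite !dotZr dotxx (dot_mul x1 x3) trmxK (dotC _ x3) /=.
ring.
Qed.


Lemma Xi_sym n m tau (Q M : 'M[R]_n) : Q^T = Q -> (Xi m tau Q M)^T = Xi m tau Q M.
Proof.
move=> hQ; rewrite /Xi !tr_block_mx !trmx0 tr_col_mx tr_row_mx trmxK !trmx0 tr_scalar_mx.
by rewrite linearZ /= hQ.
Qed.

Lemma bound_term n q (x1 x3 : 'cV[R]_n) (N : 'M[R]_(n, q)) (P : 'M[R]_(q, n)) :
  `|dot x3 (N *m (P *m x1))| <= enorm x3 * enorm x1 * (opnorm N * Num.sqrt (frob2 P)).
Proof.
apply: (le_trans (dot_abs _ _)).
rewrite -mulrA ler_wpM2l ?enorm_ge0 //.
apply: (le_trans (opnorm_bound _ _)).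
rewrite mulrCA ler_wpM2l ?opnorm_ge0 //.
by rewrite mulrC; apply: enorm_mul.
Qed.

Lemma two_prod k1 k2 (x1 : 'cV[R]_k1) (x3 : 'cV[R]_k2) :
  2 * (enorm x3 * enorm x1) <= nsq x1 + nsq x3.
Proof.
rewrite -!sqr_enorm; set a := enorm x1; set b := enorm x3.
have : 0 <= (a - b) ^+ 2 by rewrite sqr_ge0.
rewrite sqrrB; lra.
Qed.

End Aux.
Unset Implicit Arguments. Set Strict Implicit.

Theorem theorem1 (R : realType) (n p l m N V : nat)
  (hn : (1 <= n)%N) (hp : (1 <= p)%N)
  (L : 'M[R]_(l, n)) (hL : \rank L = l)
  (ubar : 'cV[R]_p) (hubar : forall i, 0 <= ubar i 0)
  (f : 'cV[R]_n -> 'cV[R]_n) (g : 'cV[R]_n -> 'cV[R]_p -> 'M[R]_(n, p))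
  (hf : C2 f) (hg : C2 (joint g))
  (hOmega : bounded_set (Omega L f g))
  (tau eps eta : R) (htau : 0 <= tau <= 1) (heps : 0 < eps) (heta : eps <= eta)
  (S : 'I_N -> 'M[R]_n * 'M[R]_(n, p)) (hS : forall k, Omega L f g (S k))
  (AB : 'I_V -> 'M[R]_n * 'M[R]_(n, p))
  (hAB : forall i, is_vertex S (AB i))
  (hABall : forall v, is_vertex S v -> exists i, AB i = v)
  (Yset Zset : set 'M[R]_(p, n))
  (hY0 : Yset !=set0) (hYc : convex_mxset Yset) (hYk : compact Yset)
  (hZ0 : Zset !=set0) (hZc : convex_mxset Zset) (hZk : compact Zset)
  (Qs : 'M[R]_n) (Ys Zs : 'M[R]_(p, n))
  (hopt : learner_optimal m L ubar tau eps eta AB Yset Zset Qs Ys Zs)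
  (j : {ffun 'I_p -> bool}) :
  exists ell : R, 0 <= ell /\
    forall (A : 'M[R]_n) (B : 'M[R]_(n, p)), Omega L f g (A, B) ->
    forall (dA : 'M[R]_n) (dB : 'M[R]_(n, p)),
      `| lambda_min (Xi m tau Qs (Mcl A B j Qs Ys Zs))
         - lambda_min (Xi m tau Qs (Mcl (A + dA) (B + dB) j Qs Ys Zs)) |
      <= ell * (opnorm dA + opnorm dB).
Proof.
case: hopt => [[hQs _] _].
have k0 : (0 < n + m + n)%N by rewrite addn_gt0 hn orbT.
pose W := Emat R j *m Ys + Emat_c R j *m Zs.
pose KQ := Num.sqrt (frob2 Qs); pose KW := Num.sqrt (frob2 W).
have KQ0 : 0 <= KQ by apply: sqrtr_ge0.
have KW0 : 0 <= KW by apply: sqrtr_ge0.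
exists (KQ + KW); split; first by rewrite addr_ge0.
move=> A B _ dA dB.
have a0 := opnorm_ge0 dA; have b0 := opnorm_ge0 dB.
rewrite !lambda_min_mu ?Xi_sym //.
apply: (le_trans (mu_lip (kap := opnorm dA * KQ + opnorm dB * KW) k0 _)); last first.
  have h1 : 0 <= opnorm dA * KW by rewrite mulr_ge0.
  have h2 : 0 <= opnorm dB * KQ by rewrite mulr_ge0.
  rewrite mulrDl !mulrDr; lra.
move=> x; rewrite -[x]vsubmxK -[usubmx x]vsubmxK !qf_Xi !nsq_col.
set x1 := usubmx (usubmx x); set x2 := dsubmx (usubmx x); set x3 := dsubmx x.
set D1 := dot x3 (dA *m (Qs *m x1)); set D2 := dot x3 (dB *m (W *m x1)).
have eM : dot x3 (Mcl (A + dA) (B + dB) j Qs Ys Zs *m x1) =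
   dot x3 (Mcl A B j Qs Ys Zs *m x1) + D1 + D2.
  rewrite /D1 /D2 /Mcl /W; move: (Emat R j) (Emat_c R j) => E1 E2.
  rewrite !mulmxDl !mulmxDr -!mulmxA !dotDr /=; ring.
rewrite eM.
set D0 := dot x3 (Mcl A B j Qs Ys Zs *m x1).
apply: (le_trans (y := `|2 * (D1 + D2)|)).
  by rewrite le_eqVlt; apply/orP; left; apply/eqP; congr `|_|; rewrite /=; ring.
have h1 := bound_term x1 x3 dA Qs; have h2 := bound_term x1 x3 dB W.
have h3 := two_prod x1 x3.
rewrite -/D1 -/D2 -/KQ -/KW in h1 h2.
set P := enorm x3 * enorm x1 in h1 h2 h3.
set k1 := opnorm dA * KQ in h1 *; set k2 := opnorm dB * KW in h2 *.
have k10 : 0 <= k1 by rewrite mulr_ge0.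
have k20 : 0 <= k2 by rewrite mulr_ge0.
have h4 := ler_wpM2r (addr_ge0 k10 k20) h3.
have h5 : 0 <= nsq x2 * (k1 + k2) by rewrite mulr_ge0 ?nsq_ge0 ?addr_ge0.
have h6 : `|2 * (D1 + D2)| <= 2 * (`|D1| + `|D2|).
  by rewrite normrM ger0_norm // ler_wpM2l // ler_normD.
apply: (le_trans h6).
have h7 : 2 * (`|D1| + `|D2|) <= 2 * P * (k1 + k2).
  rewrite -mulrA ler_wpM2l // mulrDr; exact: lerD.
apply: (le_trans h7).
rewrite [X in _ <= X]mulrC.
move: h4 h5; rewrite !mulrDl; lra.
Qed.
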